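(* Let $G=(V,E;w)$ be a finite simple graph with positive edge weights. The matching game $\Gamma_G$ is population monotonic if and only if every connected component of $G$ with at least two vertices is a double-star whose two centers $u,v$ (for a suitable choice of the double-star decomposition) form a dominant pair.
   Context: $G=(V,E;w)$ is a finite simple graph with edge weights $w:E\to\mathbb{R}$, $w_e>0$ for all $e\in E$; $w_{ij}$ is the weight of edge $ij$. The matching game on $G$ is the cooperative game $\Gamma_G=(N,\gamma)$ with $N=V$ and $\gamma(S)$ the maximum weight of a matching in $G[S]$ ($\gamma(\emptyset)=0$). A population monotonic allocation scheme (PMAS) is a family $(\boldsymbol{x}_S)_{\emptyset\neq S\subseteq N}$, $\boldsymbol{x}_S=(x_{S,i})_{i\in S}\in\mathbb{R}^S$, with (efficiency) $\sum_{i\in S}x_{S,i}=\gamma(S)$ for all nonempty $S$ and (monotonicity) $x_{S,i}\le x_{T,i}$ whenever $\emptyset\ne S\subseteq T\subseteq N$, $i\in S$; $\Gamma_G$ is population monotonic if it admits a PMAS. A double-star is a graph whose vertex set is partitioned into a set $K=\{u,v\}$ of two adjacent vertices (the centers) and an independent set $I$, such that every vertex of $I$ is adjacent to at least one of $u,v$ (so all edges lie within $K$ or between $K$ and $I$; a star with at least one edge is a double-star, taking as centers the star's center and one leaf). Adjacent vertices $u,v$ form a dominant pair if $w_{uv}\ge w_{uu'}+w_{vv'}$ for all edges $uu'\ne uv$ and $vv'\ne uv$ (with $u'=v'$ allowed), and moreover, if one of them, say $v$, has no incident edge other than $uv$, then $w_{uv}\ge w_{uu'}$ for every edge $uu'\ne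 uv$; equivalently, $w_{uv}\ge\sigma_u+\sigma_v$ where $\sigma_u$ (resp. $\sigma_v$) is the maximum weight of an edge other than $uv$ incident to $u$ (resp. $v$), or $0$ if none exists. *)

(* Defs.v *)
From mathcomp Require Import all_boot all_order all_algebra.
Set Implicit Arguments. Unset Strict Implicit. Unset Printing Implicit Defensive.
Import Order.TTheory GRing.Theory Num.Theory.
Local Open Scope ring_scope.

(* A graph on the finite vertex type T is given by an adjacency relation e
   (assumed symmetric and irreflexive in the theorem), and edge weights by
   w : T -> T -> R (only the values w x y with e x y matter; w x y is the
   weight of the edge xy). *)

Section Matching.
Variables (R : realFieldType) (T : finType) (e : rel T) (w : T -> T -> R).

(* A matching of G[S], given as a set M of oriented pairs (x,y), each one an
   edge xy of G with both ends in S, such that distinct pairs of M have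
   disjoint sets of endpoints (so each edge appears in at most one
   orientation and each vertex is covered at most once). *)
Definition is_matching (S : {set T}) (M : {set T * T}) : bool :=
  [forall p in M, [&& e p.1 p.2, p.1 \in S & p.2 \in S]] &&
  [forall p in M, forall q in M,
     (p != q) ==> [disjoint [set p.1; p.2] & [set q.1; q.2]]].

Definition matching_weight (M : {set T * T}) : R :=
  \sum_(p in M) w p.1 p.2.

(* gamma(S): maximum weight of a matching in G[S] (the empty matching has
   weight 0, so 0 is a valid neutral element). *)
Definition gamma (S : {set T}) : R :=
  \big[Num.max/0]_(M : {set T * T} | is_matching S M) matching_weight M.

Definition is_PMAS (x : {set T} -> T -> R) : Prop :=
  (forall S : {set T}, S != set0 -> \sum_(i in S) x S i = gamma S) /\
  (forall (S U : {set T}) (i : T), S \subset U -> i \in S -> x S i <= x U i).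

Definition population_monotonic : Prop := exists x, is_PMAS x.

Definition component (a : T) : {set T} := [set b | connect e a b].

(* The vertex set C (a connected component) induces a double-star with
   centers u, v: u,v adjacent in C, every other vertex of C adjacent to
   u or v, and every edge inside C has an endpoint in {u,v} (so
   I = C \ {u,v} is independent). *)
Definition double_star_on (C : {set T}) (u v : T) : Prop :=
  [/\ u \in C, v \in C, e u v,
      (forall x, x \in C -> [|| x == u, x == v, e x u | e x v]) &
      (forall x y, x \in C -> y \in C -> e x y ->
         [|| x == u, x == v, y == u | y == v])].

Definition dominant_pair (u v : T) : Prop :=
  [/\ e u v,
      (forall u' v', e u u' -> u' != v -> e v v' -> v' != u ->
         w u u' + w v v' <= w u v),
      ((forall v', e v v' -> v' = u) -> forall u', e u u' -> w u u' <= w u v) &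
      ((forall u', e u u' -> u' = v) -> forall v', e v v' -> w v v' <= w u v)].

End Matching.

(* Main.v *)
Require Import Defs.
From mathcomp Require Import all_boot all_order all_algebra.
From mathcomp Require Import lra.
From Stdlib Require Import ClassicalEpsilon.
Set Implicit Arguments. Unset Strict Implicit. Unset Printing Implicit Defensive.
Import Order.TTheory GRing.Theory Num.Theory.
Local Open Scope ring_scope.

Section BMax.
Variables (R : realFieldType) (I : finType).
Lemma bmax_ge0 (P : pred I) (F : I -> R) : 0 <= \big[Num.max/0]_(i | P i) F i.
Proof. elim/big_rec: _ => // i x _ hx. by rewrite le_max hx orbT. Qed.
Lemma bmax_le (P : pred I) (F : I -> R) c : 0 <= c -> (forall i, P i -> F i <= c) ->
  \big[Num.max/0]_(i | P i) F i <= c.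
Proof. move=> c0 h. elim/big_ind: _ => // x y hx hy. by rewrite ge_max hx hy. Qed.
Lemma le_bmax (P : pred I) (F : I -> R) i : P i -> F i <= \big[Num.max/0]_(j | P j) F j.
Proof. move=> Pi; rewrite (bigD1 i Pi) /=. by rewrite le_max lexx. Qed.
Lemma sumU (A B : {set I}) (F : I -> R) : [disjoint A & B] ->
  \sum_(i in A :|: B) F i = \sum_(i in A) F i + \sum_(i in B) F i.
Proof. move=> d; rewrite -bigU //; apply: eq_bigl => i; by rewrite !inE. Qed.
Lemma sum2 (a b : I) (F : I -> R) : a != b -> \sum_(i in [set a; b]) F i = F a + F b.
Proof. by move=> ab; rewrite big_setU1 ?big_set1 // inE. Qed.
Lemma sum3 (a b c : I) (F : I -> R) : a != b -> a != c -> b != c ->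
  \sum_(i in [set a; b; c]) F i = F a + F b + F c.
Proof.
move=> ab ac bc; rewrite setUC big_setU1 /=; last by rewrite !inE negb_or !(eq_sym c) ac bc.
by rewrite sum2 // addrC.
Qed.
Lemma card3 (a b c : I) : (#|[set a; b; c]| <= 3)%N.
Proof. rewrite setUC cardsU1 cards2. by case: (_ \notin _); case: (a != b). Qed.
End BMax.

Section Proofs.
Variables (R : realFieldType) (T : finType) (e : rel T) (w : T -> T -> R).
Hypotheses (esym : symmetric e) (eirr : irreflexive e)
  (wsym : forall x y, e x y -> w x y = w y x) (wpos : forall x y, e x y -> 0 < w x y).

Local Notation gam := (gamma e w).

Lemma edge_neq a b : e a b -> a != b.
Proof. by move=> h; apply/eqP => ab; move: h; rewrite ab eirr. Qed.

Lemma gamma_ge (S : {set T}) M : is_matching e S M -> matching_weight w M <= gam S.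
Proof. by move=> h; rewrite /gamma; apply: le_bmax. Qed.
Lemma gamma_ge0 (S : {set T}) : 0 <= gam S.
Proof. exact: bmax_ge0. Qed.
Lemma gamma_le (S : {set T}) c : 0 <= c ->
  (forall M, is_matching e S M -> matching_weight w M <= c) -> gam S <= c.
Proof. by move=> c0 h; apply: bmax_le. Qed.

Lemma matching1 (S : {set T}) a b : e a b -> a \in S -> b \in S -> is_matching e S [set (a, b)].
Proof.
move=> eab aS bS; apply/andP; split; apply/forallP => p; apply/implyP => /set1P -> /=.
  by rewrite eab aS bS.
by apply/forallP => q; apply/implyP => /set1P ->; rewrite eqxx.
Qed.

Lemma gamma_edge (S : {set T}) a b : e a b -> a \in S -> b \in S -> w a b <= gam S.
Proof.
move=> eab aS bS; have := gamma_ge (matching1 eab aS bS).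
by rewrite /matching_weight big_set1.
Qed.

Lemma m_edge (S : {set T}) M p : is_matching e S M -> p \in M -> [&& e p.1 p.2, p.1 \in S & p.2 \in S].
Proof. by case/andP => /forallP h _ pM; move/implyP: (h p); apply. Qed.

Lemma m_same (S : {set T}) M p q z : is_matching e S M -> p \in M -> q \in M ->
  z \in [set p.1; p.2] -> z \in [set q.1; q.2] -> p = q.
Proof.
case/andP => _ /forallP h pM qM zp zq; apply/eqP; apply/negPn/negP => pq.
move/implyP: (h p) => /(_ pM) /forallP /(_ q) /implyP /(_ qM) /implyP /(_ pq) d.
by rewrite (disjointFr d zp) in zq.
Qed.

Lemma m_small (S : {set T}) M p q : (#|S| <= 3)%N -> is_matching e S M -> p \in M -> q \in M -> p = q.
Proof.
move=> cS hM pM qM; apply/eqP; apply/negPn/negP => pq.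
case/and3P: (m_edge hM pM) => ep p1 p2; case/and3P: (m_edge hM qM) => eq q1 q2.
have d : [disjoint [set p.1; p.2] & [set q.1; q.2]].
  case/andP: hM => _ /forallP h.
  by move/implyP: (h p) => /(_ pM) /forallP /(_ q) /implyP /(_ qM) /implyP /(_ pq).
have sub : [set p.1; p.2] :|: [set q.1; q.2] \subset S.
  by apply/subsetP => z; rewrite !inE => /orP [/orP [] | /orP []] /eqP ->.
have := subset_leq_card sub; rewrite cardsU.
move: d; rewrite -setI_eq0 => /eqP ->; rewrite cards0 !cards2 (edge_neq ep) (edge_neq eq).
move=> h; have := leq_trans h cS. by [].
Qed.

Lemma gamma_small (S : {set T}) c : (#|S| <= 3)%N -> 0 <= c ->
  (forall a b, e a b -> a \in S -> b \in S -> w a b <= c) -> gam S <= c.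
Proof.
move=> cS c0 h; apply: gamma_le => // M hM.
case: (set_0Vmem M) => [-> | [p pM]]; first by rewrite /matching_weight big_set0.
have -> : M = [set p].
  by apply/setP => q; rewrite inE; apply/idP/eqP => [qM | ->] //; apply: (m_small cS hM).
rewrite /matching_weight big_set1.
by case/and3P: (m_edge hM pM) => ep p1 p2; apply: h.
Qed.

Lemma gamma1 i : gam [set i] = 0.
Proof.
apply/eqP; rewrite eq_le gamma_ge0 andbT; apply: gamma_small => //.
  by rewrite cards1.
by move=> a b eab /set1P ea /set1P eb; move: eab; rewrite ea eb eirr.
Qed.

Lemma gamma2 a b : e a b -> gam [set a; b] = w a b.
Proof.
move=> eab; apply/eqP; rewrite eq_le; apply/andP; split; last first.
  by apply: gamma_edge => //; apply/set2P; [left|right].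
apply: gamma_small; first by rewrite cards2; case: (a != b).
  exact: ltW (wpos eab).
move=> x y exy /set2P [] ex /set2P [] ey; move: exy; rewrite ex ey ?eirr //.
by move=> eba; rewrite wsym.
Qed.

Lemma in3P (a b c p : T) : p \in [set a; b; c] -> [\/ p = a, p = b | p = c].
Proof. by rewrite !inE => /orP [/orP [] | ] /eqP ->; constructor. Qed.

Lemma closC a0 z y : z \in component e a0 -> e z y -> y \in component e a0.
Proof. rewrite !inE => h ezy; exact: connect_trans h (connect1 ezy). Qed.

Lemma neq0_1 (i : T) : [set i] != set0.
Proof. by apply/set0Pn; exists i; rewrite set11. Qed.
Lemma neq0_2 (i j : T) : [set i; j] != set0.
Proof. by apply/set0Pn; exists i; rewrite !inE eqxx. Qed.
Lemma neq0_3 (i j k : T) : [set i; j; k] != set0.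
Proof. by apply/set0Pn; exists i; rewrite !inE eqxx. Qed.

Lemma sub_ab (a b z : T) : [set a; b] \subset [set a; b; z].
Proof. by apply/subsetP => y; rewrite !inE => ->. Qed.
Lemma sub_az (a b z : T) : [set a; z] \subset [set a; b; z].
Proof. by apply/subsetP => y; rewrite !inE => /orP [] ->; rewrite ?orbT. Qed.
Lemma sub_bz (a b z : T) : [set b; z] \subset [set a; b; z].
Proof. by apply/subsetP => y; rewrite !inE => /orP [] ->; rewrite ?orbT. Qed.

Section Nec.
Variable x : {set T} -> T -> R.
Hypothesis hx : is_PMAS e w x.

Lemma N0 (S : {set T}) i : i \in S -> 0 <= x S i.
Proof.
move=> iS; case: hx => eff mono.
have h1 := eff [set i] (neq0_1 i); rewrite big_set1 gamma1 in h1.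
by rewrite -h1; apply: mono => //; rewrite ?sub1set ?set11.
Qed.

Lemma N2 a b : e a b -> x [set a; b] a + x [set a; b] b = w a b.
Proof.
move=> eab; case: hx => eff mono.
by rewrite -sum2 ?edge_neq // eff ?neq0_2 // gamma2.
Qed.

Lemma mono3 a b z i : i \in [set a; b] -> x [set a; b] i <= x [set a; b; z] i.
Proof. by case: hx => _ mono; apply: mono; apply: sub_ab. Qed.

Variable a0 : T.
Local Notation C := (component e a0).

Lemma F3 a b z : e a b -> a \in C ->
  (forall p q, e p q -> p \in C -> w p q <= w a b) -> z != a -> z != b -> z \in C ->
  [/\ x [set a; b; z] z = 0, x [set a; b; z] a = x [set a; b] a &
      x [set a; b; z] b = x [set a; b] b].
Proof.
move=> eab aC hm za zb zC; case: hx => eff mono.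
have ab := edge_neq eab; have bC := closC aC eab.
have hs := eff [set a; b; z] (neq0_3 a b z).
rewrite sum3 // 1?eq_sym // in hs.
have hg : gam [set a; b; z] <= w a b.
  apply: gamma_small (card3 a b z) (ltW (wpos eab)) _ => p q epq /in3P pin _.
  by apply: hm => //; case: pin => ->.
have s2 := N2 eab.
have m1 : x [set a; b] a <= x [set a; b; z] a by apply: mono3; rewrite !inE eqxx.
have m2 : x [set a; b] b <= x [set a; b; z] b by apply: mono3; rewrite !inE eqxx ?orbT.
have z0 : 0 <= x [set a; b; z] z by apply: N0; rewrite !inE eqxx ?orbT.
split; lra.
Qed.

Lemma F4 a b z : e a b -> a \in C ->
  (forall p q, e p q -> p \in C -> w p q <= w a b) -> e a z -> z != b ->
  x [set a; z] z = 0 /\ w a z <= x [set a; b] a.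
Proof.
move=> eab aC hm eaz zb; case: hx => eff mono.
have za : z != a by rewrite eq_sym edge_neq.
have zC := closC aC eaz.
have [h1 h2 h3] := F3 eab aC hm za zb zC.
have m1 : x [set a; z] z <= x [set a; b; z] z by apply: mono; [apply: sub_az | rewrite !inE eqxx ?orbT].
have m2 : x [set a; z] a <= x [set a; b; z] a by apply: mono; [apply: sub_az | rewrite !inE eqxx].
have z0 : 0 <= x [set a; z] z by apply: N0; rewrite !inE eqxx ?orbT.
have s2 := N2 eaz.
split; lra.
Qed.

Lemma K a b y1 y2 : e a b -> a \in C ->
  (forall p q, e p q -> p \in C -> w p q <= w a b) ->
  e a y1 -> y1 != b -> e y1 y2 -> y2 != a -> y2 != b -> False.
Proof.
move=> eab aC hm eay1 y1b ey1y2 y2a y2b; case: hx => eff mono.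
have [h1 _] := F4 eab aC hm eay1 y1b.
have s1 := N2 eay1.
have s12 := N2 ey1y2.
have hs := eff [set a; y1; y2] (neq0_3 a y1 y2).
have d1 := edge_neq eay1; have d2 : a != y2 by rewrite eq_sym.
have d3 := edge_neq ey1y2; rewrite sum3 // in hs.
have m1 : x [set a; y1] a <= x [set a; y1; y2] a by apply: mono3; rewrite !inE eqxx.
have m2 : x [set y1; y2] y1 <= x [set a; y1; y2] y1.
  by apply: mono; [apply: sub_bz | rewrite !inE eqxx ?orbT].
have m3 : x [set y1; y2] y2 <= x [set a; y1; y2] y2.
  by apply: mono; [apply: sub_bz | rewrite !inE eqxx ?orbT].
have p1 := wpos eay1; have p2 := wpos ey1y2.
case eay2 : (e a y2).
- have [h2 _] := F4 eab aC hm eay2 y2b.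
  have s2 := N2 eay2.
  have m4 : x [set a; y2] a <= x [set a; y1; y2] a.
    by apply: mono; [apply: sub_az | rewrite !inE eqxx].
  have p3 := wpos eay2.
  have hg : gam [set a; y1; y2] <= Num.max (Num.max (w a y1) (w y1 y2)) (w a y2).
    apply: gamma_small (card3 _ _ _) _ _; first by rewrite !le_max (ltW p1).
    move=> p q h /in3P hp /in3P hq; case: hp h => ->; case: hq => -> h.
    all: try first [ by rewrite eirr in h | by rewrite !le_max lexx ?orbT | by rewrite wsym // !le_max lexx ?orbT].
  have hlt : Num.max (Num.max (w a y1) (w y1 y2)) (w a y2) < gam [set a; y1; y2].
    rewrite !gt_max; apply/andP; split; [apply/andP; split|]; lra.
  by have := lt_le_trans hlt hg; rewrite ltxx.
- have hg : gam [set a; y1; y2] <= Num.max (w a y1) (w y1 y2).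
    apply: gamma_small (card3 _ _ _) _ _; first by rewrite !le_max (ltW p1).
    move=> p q h /in3P hp /in3P hq; case: hp h => ->; case: hq => -> h;
      first [ by rewrite eirr in h | by rewrite !le_max lexx ?orbT | by rewrite wsym // !le_max lexx ?orbT
            | by rewrite eay2 in h | by rewrite esym eay2 in h ].
  have hlt : Num.max (w a y1) (w y1 y2) < gam [set a; y1; y2].
    rewrite !gt_max; apply/andP; split; lra.
  by have := lt_le_trans hlt hg; rewrite ltxx.
Qed.

Lemma nec : (1 < #|C|)%N ->
  exists u v, double_star_on e C u v /\ dominant_pair e w u v.
Proof.
move=> hC.
have a0C : a0 \in C by rewrite inE connect0.
have : ~~ (C \subset [set a0]).
  apply/negP => /subset_leq_card; rewrite cards1 => h.
  by have := leq_ltn_trans h hC; rewrite ltnn.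
case/subsetPn => b bC; rewrite inE => ba.
move: (bC); rewrite inE => /connectP [[|c pth] /=]; first by move=> _ ebe; rewrite ebe eqxx in ba.
case/andP => ea0c _ _.
pose P := fun p : T * T => e p.1 p.2 && (p.1 \in C).
have Pp0 : P (a0, c) by rewrite /P /= ea0c a0C.
case: (arg_maxP (fun p : T * T => w p.1 p.2) Pp0) => [[u v]] /andP [/= euv uC] hm.
have hmax : forall p q, e p q -> p \in C -> w p q <= w u v.
  by move=> p q epq pC; apply: (hm (p, q)); rewrite /P /= epq pC.
have vC := closC uC euv.
have evu : e v u by rewrite esym.
have hmax' : forall p q, e p q -> p \in C -> w p q <= w v u.
  by move=> p q epq pC; rewrite -(wsym euv); apply: hmax.
have setvu : [set v; u] = [set u; v] by apply/setP => z; rewrite !inE orbC.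
have uv := edge_neq euv.
have Kuv := K euv uC hmax; have Kvu := K evu vC hmax'.
have Dstep : forall z y, [|| z == u, z == v, e z u | e z v] -> e z y ->
    [|| y == u, y == v, e y u | e y v].
  move=> z y hz ezy; case yu: (y == u) => //; case yv: (y == v) => //=.
  case zu: (z == u); first by move/eqP: zu => zu; rewrite zu in ezy; rewrite (esym y u) ezy.
  case zv: (z == v); first by move/eqP: zv => zv; rewrite zv in ezy; rewrite (esym y v) ezy orbT.
  move: hz; rewrite zu zv /= => /orP [ezu | ezv]; exfalso.
  - by apply: (Kuv z y); rewrite ?zv ?yu ?yv // (esym u z).
  - by apply: (Kvu z y); rewrite ?zu ?yu ?yv // (esym v z).
have Dpath : forall p z, [|| z == u, z == v, e z u | e z v] -> path e z p ->
    [|| (last z p) == u, (last z p) == v, e (last z p) u | e (last z p) v].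
  elim => [//| d p IH] z hz /= /andP [ezd hp]; exact: IH (Dstep _ _ hz ezd) hp.
have DC : forall y, y \in C -> [|| y == u, y == v, e y u | e y v].
  move=> y; rewrite inE => ya.
  have cu : connect e u a0 by rewrite (sym_connect_sym esym); move: uC; rewrite inE.
  case/connectP: (connect_trans cu ya) => p hp ->.
  by apply: Dpath => //; rewrite eqxx.
exists u, v; split.
  split => // x1 y1 x1C y1C ex1y1.
  case xu: (x1 == u) => //; case xv: (x1 == v) => //; case yu: (y1 == u) => //;
    case yv: (y1 == v) => //=.
  move: (DC x1 x1C); rewrite xu xv /= => /orP [exu | exv]; exfalso.
  - by apply: (Kuv x1 y1); rewrite ?xv ?yu ?yv // (esym u x1).
  - by apply: (Kvu x1 y1); rewrite ?xu ?yu ?yv // (esym v x1).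
split => //.
- move=> u' v' euu' u'v evv' v'u.
  have [_ h1] := F4 euv uC hmax euu' u'v.
  have [_ h2] := F4 evu vC hmax' evv' v'u.
  rewrite setvu in h2.
  have s := N2 euv; lra.
- by move=> _ u' euu'; apply: hmax.
- by move=> _ v' evv'; apply: hmax.
Qed.

End Nec.
Lemma sumID (A B : {set T}) (F : T -> R) :
  \sum_(i in A) F i = \sum_(i in A :&: B) F i + \sum_(i in A :\: B) F i.
Proof. exact: big_setID. Qed.

Lemma inter2 (A : {set T}) u v z : u != v ->
  (z \in A :&: [set u; v]) = ((z == u) && (u \in A)) || ((z == v) && (v \in A)).
Proof.
move=> uv; rewrite !inE; case zu: (z == u); case zv: (z == v); rewrite /= ?andbT ?andbF //.
- by move/eqP: zu => zu; move/eqP: zv => zv; move: uv; rewrite -zu -zv eqxx.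
- by move/eqP: zu => ->; rewrite orbF.
- by move/eqP: zv => ->.
Qed.

Definition good (C : {set T}) (p : T * T) : Prop :=
  double_star_on e C p.1 p.2 /\ dominant_pair e w p.1 p.2.
Definition pairC (C : {set T}) : option (T * T) :=
  match excluded_middle_informative (exists p, good C p) with
  | left H => Some (proj1_sig (constructive_indefinite_description _ H))
  | right _ => None
  end.
Lemma pairCP C : match pairC C with Some p => good C p | None => ~ (exists p, good C p) end.
Proof.
rewrite /pairC; case: excluded_middle_informative => H //=.
exact: (proj2_sig (constructive_indefinite_description _ H)).
Qed.

Definition sig (u v : T) : R := \big[Num.max/0]_(z | e v z && (z != u)) w v z.
Definition mx (S : {set T}) (c : T) : R := \big[Num.max/0]_(z | (z \in S) && e c z) w c z.
Definition X (S : {set T}) (i : T) : R :=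
  match pairC (component e i) with
  | Some p => if i == p.1 then (if p.2 \in S then w p.1 p.2 - sig p.1 p.2 else mx S p.1)
              else if i == p.2 then (if p.1 \in S then sig p.1 p.2 else mx S p.2)
              else 0
  | None => 0
  end.

Lemma compeq i j : connect e i j -> component e j = component e i.
Proof.
move=> h; apply/setP => z; rewrite !inE.
by rewrite (same_connect (sym_connect_sym esym) h).
Qed.

Section Dom.
Variables u v : T.
Hypothesis dp : dominant_pair e w u v.

Lemma D0 z : e u z -> w u z <= w u v.
Proof.
case: dp => euv c2 c3 c4 euz.
case: (z =P v) => [->|/eqP zv]; first exact: lexx.
case: (boolP [exists v', e v v' && (v' != u)]).
- case/existsP => v' /andP [evv' v'u].
  have := c2 z v' euz zv evv' v'u; have := wpos evv'; lra.
- move/existsPn => h; apply: c3 => // v' evv'; apply/eqP.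
  by have := h v'; rewrite evv' /= negbK.
Qed.

Lemma D0' z : e v z -> w v z <= w u v.
Proof.
case: dp => euv c2 c3 c4 evz.
case: (z =P u) => [->|/eqP zu]; first by rewrite wsym // esym.
case: (boolP [exists u', e u u' && (u' != v)]).
- case/existsP => u' /andP [euu' u'v].
  have := c2 u' z euu' u'v evz zu; have := wpos euu'; lra.
- move/existsPn => h; apply: c4 => // u' euu'; apply/eqP.
  by have := h u'; rewrite euu' /= negbK.
Qed.

Lemma D2 : sig u v <= w u v.
Proof.
case: dp => euv _ _ _.
apply: bmax_le; first exact: ltW (wpos euv).
by move=> z /andP [evz _]; apply: D0'.
Qed.

Lemma D1 z : e u z -> z != v -> w u z + sig u v <= w u v.
Proof.
move=> euz zv; case: dp => euv c2 _ _.
have h0 := D0 euz.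
suff : sig u v <= w u v - w u z by lra.
apply: bmax_le; first by rewrite subr_ge0.
move=> z' /andP [evz' z'u]; have := c2 z z' euz zv evz' z'u; lra.
Qed.

Lemma D3 z : e v z -> z != u -> w v z <= sig u v.
Proof. by move=> evz zu; apply: (le_bmax (P := fun z => e v z && (z != u))); rewrite evz zu. Qed.

End Dom.

Lemma XU S u v : pairC (component e u) = Some (u, v) ->
  X S u = if v \in S then w u v - sig u v else mx S u.
Proof. by move=> h; rewrite /X h /= eqxx. Qed.

Lemma XV S u v : pairC (component e v) = Some (u, v) -> u != v ->
  X S v = if u \in S then sig u v else mx S v.
Proof. by move=> h uv; rewrite /X h /= eq_sym (negbTE uv) eqxx. Qed.

Lemma XO S i u v : pairC (component e i) = Some (u, v) -> i != u -> i != v -> X S i = 0.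
Proof. by move=> h iu iv; rewrite /X h /= (negbTE iu) (negbTE iv). Qed.

Lemma X_ge0 S i : 0 <= X S i.
Proof.
rewrite /X; have := pairCP (component e i).
case: pairC => [[u v]|] // [_ dp] /=.
have := D2 dp; have := bmax_ge0 (fun z => e v z && (z != u)) (w v).
rewrite -/(sig u v) => h1 h2.
case: ifP => _; [case: ifP => _; [lra | exact: bmax_ge0] |].
case: ifP => _; [case: ifP => _; [lra | exact: bmax_ge0] | exact: lexx].
Qed.

Lemma X_mono (S U : {set T}) i : S \subset U -> X S i <= X U i.
Proof.
move=> sSU; rewrite /X; have := pairCP (component e i).
case: pairC => [[u v]|] // [[_ _ euv _ _] dp] /=.
have uv := edge_neq euv.
have mxmono : forall c, mx S c <= mx U c.
  move=> c; apply: bmax_le; first exact: bmax_ge0.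
  move=> z /andP [zS ecz]; apply: (le_bmax (P := fun z => (z \in U) && e c z)).
  by rewrite (subsetP sSU z zS) ecz.
case: ifP => _.
  case vS: (v \in S); first by rewrite (subsetP sSU v vS).
  case vU: (v \in U); last exact: mxmono.
  apply: bmax_le; first by have := D2 dp; lra.
  move=> z /andP [zS euz]; have zv : z != v by apply/eqP => zv; rewrite -zv zS in vS.
  have := D1 dp euz zv; lra.
case: ifP => _; last exact: lexx.
case uS: (u \in S); first by rewrite (subsetP sSU u uS); exact: lexx.
case uU: (u \in U); last exact: mxmono.
apply: bmax_le; first exact: bmax_ge0.
move=> z /andP [zS evz]; have zu : z != u by apply/eqP => zu; rewrite -zu zS in uS.
exact: D3.
Qed.

Lemma sum_match (S : {set T}) M (f : T -> R) : (forall i, 0 <= f i) ->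
  is_matching e S M -> \sum_(p in M) (f p.1 + f p.2) <= \sum_(i in S) f i.
Proof.
move=> f0 hM; rewrite big_split /=.
have inj1 : {in M &, injective (fun p : T * T => p.1)}.
  move=> p q pM qM /= h; apply: (m_same (z := p.1) hM pM qM); rewrite ?h !inE eqxx //.
have inj2 : {in M &, injective (fun p : T * T => p.2)}.
  move=> p q pM qM /= h; apply: (m_same (z := p.2) hM pM qM); rewrite ?h !inE eqxx ?orbT //.
have e1 : \sum_(p in M) f p.1 = \sum_(i in [set p.1 | p in M]) f i by rewrite (big_imset _ inj1).
have e2 : \sum_(p in M) f p.2 = \sum_(i in [set p.2 | p in M]) f i by rewrite (big_imset _ inj2).
have d : [disjoint [set p.1 | p in M] & [set p.2 | p in M]].
  rewrite -setI_eq0; apply/eqP/setP => z; rewrite !inE; apply/negP.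
  case/andP => /imsetP [p pM ->] /imsetP [q qM pq].
  case/and3P: (m_edge hM pM) => ep _ _.
  case: (p =P q) => [epq | /eqP npq].
    by move: ep; rewrite pq epq eirr.
  have := m_same (z := p.1) hM pM qM; rewrite !inE eqxx pq eqxx orbT => /(_ isT isT).
  by move/eqP; rewrite (negbTE npq).
rewrite e1 e2 -sumU //.
have sub : [set p.1 | p in M] :|: [set p.2 | p in M] \subset S.
  apply/subsetP => z; rewrite inE => /orP [] /imsetP [p pM ->];
    by case/and3P: (m_edge hM pM).
rewrite (big_setID (A := S) ([set p.1 | p in M] :|: [set p.2 | p in M])) (setIidPr sub) /=.
rewrite lerDl; apply: sumr_ge0 => i _; exact: f0.
Qed.

Section Suff.
Hypothesis hds : forall a : T, (1 < #|component e a|)%N ->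
  exists u v, double_star_on e (component e a) u v /\ dominant_pair e w u v.

Lemma pair_some a b : e a b -> exists u v, pairC (component e a) = Some (u, v) /\
  good (component e a) (u, v).
Proof.
move=> eab; have := pairCP (component e a); case: pairC => [[u v] g|hn].
  by exists u, v.
exfalso; apply: hn.
have aC : a \in component e a by rewrite inE connect0.
have bC : b \in component e a by rewrite inE connect1.
have : (1 < #|component e a|)%N.
  have sub : [set a; b] \subset component e a.
    by apply/subsetP => z /set2P [] ->.
  by have := subset_leq_card sub; rewrite cards2 (edge_neq eab).
case/hds => u [v [h1 h2]]; by exists (u, v).
Qed.

Lemma charge (S : {set T}) a b : e a b -> a \in S -> b \in S -> w a b <= X S a + X S b.
Proof.
move=> eab aS bS.
have [u [v [h [ds dp]]]] := pair_some eab.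
case: (ds) => /= uC vC euv _ hedge.
have uv := edge_neq euv.
have aC : a \in component e a by rewrite inE connect0.
have bC : b \in component e a by rewrite inE connect1.
have hb : pairC (component e b) = Some (u, v) by rewrite (compeq (connect1 eab)).
have hu : pairC (component e u) = Some (u, v).
  by move: uC; rewrite inE => /compeq ->.
have hv : pairC (component e v) = Some (u, v).
  by move: vC; rewrite inE => /compeq ->.
have CUV : u \in S -> v \in S -> X S u + X S v = w u v.
  by move=> uS vS; rewrite (XU _ hu) (XV _ hv uv) uS vS; lra.
have CU : forall z, e u z -> z != v -> z \in S -> w u z <= X S u.
  move=> z euz zv zS; rewrite (XU _ hu); case: ifP => _.
    by have := D1 dp euz zv; lra.
  by apply: (le_bmax (P := fun z => (z \in S) && e u z)); rewrite zS euz.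
have CV : forall z, e v z -> z != u -> z \in S -> w v z <= X S v.
  move=> z evz zu zS; rewrite (XV _ hv uv); case: ifP => _.
    exact: D3.
  by apply: (le_bmax (P := fun z => (z \in S) && e v z)); rewrite zS evz.
have xa := X_ge0 S a; have xb := X_ge0 S b.
case: (a =P u) => [au | /eqP au].
  rewrite au in eab aS *.
  case: (b =P v) => [bv | /eqP bv].
    by rewrite bv in bS *; rewrite CUV.
  have := CU b eab bv bS; lra.
case: (a =P v) => [av | /eqP av].
  rewrite av in eab aS *.
  case: (b =P u) => [bu | /eqP bu].
    by rewrite bu in bS *; rewrite addrC CUV // wsym // esym.
  have := CV b eab bu bS; lra.
have := hedge a b aC bC eab; rewrite (negbTE au) (negbTE av) /= => /orP [/eqP bu | /eqP bv].
  rewrite bu in eab bS *; have ba : a != v by [].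
  have eua : e u a by rewrite esym.
  have := CU a eua av aS; rewrite wsym //; lra.
rewrite bv in eab bS *.
have eva : e v a by rewrite esym.
have := CV a eva au aS; rewrite wsym //; lra.
Qed.

Lemma gamma_le_sum (S : {set T}) : gam S <= \sum_(i in S) X S i.
Proof.
apply: gamma_le; first by apply: sumr_ge0 => i _; exact: X_ge0.
move=> M hM; rewrite /matching_weight.
apply: le_trans (sum_match (fun i => X_ge0 S i) hM).
apply: ler_sum => p pM; case/and3P: (m_edge hM pM) => ep p1 p2; exact: charge.
Qed.

End Suff.

Lemma X_loc (S S' : {set T}) i :
  (forall z, z \in component e i -> (z \in S) = (z \in S')) -> X S i = X S' i.
Proof.
move=> hS; rewrite /X; have := pairCP (component e i).
case: pairC => [[u v]|] // [[uC vC _ _ _] _] /=.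
have mxeq : forall c, c \in component e i -> mx S c = mx S' c.
  move=> c cC; apply: eq_bigl => z; case ecz: (e c z); last by rewrite !andbF.
  by rewrite !andbT hS // (closC cC ecz).
by rewrite (hS u uC) (hS v vC) !mxeq.
Qed.

Lemma match_sub (A B : {set T}) M : A \subset B -> is_matching e A M -> is_matching e B M.
Proof.
move=> sAB /andP [/forallP h1 h2]; apply/andP; split => //.
apply/forallP => p; apply/implyP => pM; move/implyP: (h1 p) => /(_ pM) /and3P [-> p1 p2].
by rewrite !(subsetP sAB).
Qed.

Lemma gamma_mono (A B : {set T}) : A \subset B -> gam A <= gam B.
Proof.
move=> sAB; apply: gamma_le; first exact: gamma_ge0.
move=> M hM; apply: gamma_ge; exact: match_sub hM.
Qed.

Lemma match_union (A B : {set T}) MA MB : [disjoint A & B] ->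
  is_matching e A MA -> is_matching e B MB ->
  is_matching e (A :|: B) (MA :|: MB) /\ [disjoint MA & MB].
Proof.
move=> dAB hA hB; split.
  apply/andP; split.
    apply/forallP => p; apply/implyP; rewrite inE => /orP [pM|pM].
      by case/and3P: (m_edge hA pM) => -> p1 p2; rewrite !inE p1 p2.
    by case/and3P: (m_edge hB pM) => -> p1 p2; rewrite !inE p1 p2 !orbT.
  apply/forallP => p; apply/implyP => pin; apply/forallP => q; apply/implyP => qin.
  apply/implyP => pq.
  have disjM : forall (S : {set T}) M p q, is_matching e S M -> p \in M -> q \in M -> p != q ->
      [disjoint [set p.1; p.2] & [set q.1; q.2]].
    move=> S M p' q' /andP [_ /forallP h] pM qM.
    by move/implyP: (h p') => /(_ pM) /forallP /(_ q') /implyP /(_ qM) /implyP.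
  have subA : forall p, p \in MA -> [set p.1; p.2] \subset A.
    by move=> p' pM; case/and3P: (m_edge hA pM) => _ p1 p2; apply/subsetP => z /set2P [] ->.
  have subB : forall p, p \in MB -> [set p.1; p.2] \subset B.
    by move=> p' pM; case/and3P: (m_edge hB pM) => _ p1 p2; apply/subsetP => z /set2P [] ->.
  move: pin qin; rewrite !inE => /orP [pM|pM] /orP [qM|qM].
  - exact: disjM hA pM qM pq.
  - exact: disjointWl (subA p pM) (disjointWr (subB q qM) dAB).
  - rewrite disjoint_sym.
    exact: disjointWl (subA q qM) (disjointWr (subB p pM) dAB).
  - exact: disjM hB pM qM pq.
rewrite -setI_eq0; apply/eqP/setP => p; rewrite !inE; apply/negP => /andP [pA pB].
case/and3P: (m_edge hA pA) => _ p1 _; case/and3P: (m_edge hB pB) => _ p1' _.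
by rewrite (disjointFr dAB p1) in p1'.
Qed.

Lemma gamma_super (A B : {set T}) : [disjoint A & B] -> gam A + gam B <= gam (A :|: B).
Proof.
move=> dAB.
have key : forall MA MB, is_matching e A MA -> is_matching e B MB ->
    matching_weight w MA + matching_weight w MB <= gam (A :|: B).
  move=> MA MB hA hB; have [hU dM] := match_union dAB hA hB.
  by have := gamma_ge hU; rewrite /matching_weight sumU.
have gB := gamma_mono (subsetUr A B).
suff : gam A <= gam (A :|: B) - gam B by lra.
apply: gamma_le; first by lra.
move=> MA hA.
suff : gam B <= gam (A :|: B) - matching_weight w MA by lra.
apply: gamma_le.
  have := gamma_ge (match_sub (subsetUl A B) hA); lra.
move=> MB hB; have := key MA MB hA hB; lra.
Qed.

Section Suff2.
Hypothesis hds : forall a : T, (1 < #|component e a|)%N ->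
  exists u v, double_star_on e (component e a) u v /\ dominant_pair e w u v.

Lemma single_comp (A : {set T}) i : (forall j, j \in A -> connect e i j) ->
  \sum_(j in A) X A j <= gam A.
Proof.
move=> hA; have := pairCP (component e i).
case h: pairC => [[u v]|] /=; last first.
  move=> _; rewrite big1; first exact: gamma_ge0.
  by move=> j jA; rewrite /X (compeq (hA j jA)) h.
move=> [[uC vC euv _ _] dp].
have uv := edge_neq euv.
have hu : pairC (component e u) = Some (u, v).
  by move: uC; rewrite inE => /compeq ->.
have hv : pairC (component e v) = Some (u, v).
  by move: vC; rewrite inE => /compeq ->.
rewrite (sumID A [set u; v]).
have -> : \sum_(j in A :\: [set u; v]) X A j = 0.
  apply: big1 => j; rewrite !inE => /andP [/norP [ju jv] jA].
  by apply: (XO _ _ ju jv); rewrite (compeq (hA j jA)).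
rewrite addr0.
case uA: (u \in A); case vA: (v \in A).
- have -> : A :&: [set u; v] = [set u; v].
    by apply/setP => z; rewrite inter2 // uA vA !inE ?andbT ?andbF ?orbF.
  rewrite sum2 // (XU _ hu) (XV _ hv uv) uA vA.
  have := gamma_edge euv uA vA; lra.
- have -> : A :&: [set u; v] = [set u].
    by apply/setP => z; rewrite inter2 // uA vA !inE ?andbT ?andbF ?orbF.
  rewrite big_set1 (XU _ hu) vA.
  apply: bmax_le; first exact: gamma_ge0.
  by move=> z /andP [zA euz]; apply: gamma_edge.
- have -> : A :&: [set u; v] = [set v].
    by apply/setP => z; rewrite inter2 // uA vA !inE ?andbT ?andbF ?orbF.
  rewrite big_set1 (XV _ hv uv) uA.
  apply: bmax_le; first exact: gamma_ge0.
  by move=> z /andP [zA evz]; apply: gamma_edge.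
- have -> : A :&: [set u; v] = set0.
    by apply/setP => z; rewrite inter2 // uA vA !inE ?andbT ?andbF ?orbF.
  by rewrite big_set0; exact: gamma_ge0.
Qed.

Lemma sum_le_gamma (S : {set T}) : \sum_(i in S) X S i <= gam S.
Proof.
have [n] := ubnP #|S|; elim: n S => // n IH S hS.
case: (set_0Vmem S) => [-> | [i iS]]; first by rewrite big_set0 gamma_ge0.
set Cc := component e i.
have iC : i \in Cc by rewrite inE connect0.
rewrite (sumID S Cc).
have eA : \sum_(j in S :&: Cc) X S j = \sum_(j in S :&: Cc) X (S :&: Cc) j.
  apply: eq_bigr => j; rewrite inE => /andP [jS jC].
  apply: X_loc => z; move: jC; rewrite inE => /compeq -> zC.
  by rewrite inE zC andbT.
have eB : \sum_(j in S :\: Cc) X S j = \sum_(j in S :\: Cc) X (S :\: Cc) j.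
  apply: eq_bigr => j; rewrite inE => /andP [jC jS].
  apply: X_loc => z zj.
  have zC : z \notin Cc.
    apply/negP; rewrite !inE => iz; move: jC; rewrite inE => /negP; apply.
    move: zj; rewrite inE => jz.
    by apply: connect_trans iz _; rewrite (sym_connect_sym esym).
  by rewrite inE zC.
rewrite eA eB.
have hA : \sum_(j in S :&: Cc) X (S :&: Cc) j <= gam (S :&: Cc).
  by apply: (single_comp (i := i)) => j; rewrite !inE => /andP [].
have hB : \sum_(j in S :\: Cc) X (S :\: Cc) j <= gam (S :\: Cc).
  apply: IH; rewrite ltnS in hS; apply: leq_trans hS; apply: proper_card; apply/properP; split.
    exact: subsetDl.
  by exists i => //; rewrite inE iC.
have d : [disjoint S :&: Cc & S :\: Cc].
  rewrite -setI_eq0; apply/eqP/setP => z; rewrite !inE.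
  by case: (z \in S); case: (connect e i z).
have := gamma_super d; rewrite setID; lra.
Qed.

Lemma X_PMAS : is_PMAS e w X.
Proof.
split.
  move=> S _; apply/eqP; rewrite eq_le sum_le_gamma; exact: gamma_le_sum.
by move=> S U i sSU _; apply: X_mono.
Qed.

End Suff2.
End Proofs.

Theorem mainTheorem14 (R : realFieldType) (T : finType) (e : rel T)
  (w : T -> T -> R) :
  symmetric e -> irreflexive e ->
  (forall x y, e x y -> w x y = w y x) ->
  (forall x y, e x y -> 0 < w x y) ->
  (population_monotonic e w <->
   forall a : T, (1 < #|component e a|)%N ->
     exists u v, double_star_on e (component e a) u v /\ dominant_pair e w u v).
Proof.
move=> esym eirr wsym wpos; split.
  by case=> x hx a ha; apply: (nec esym eirr wsym wpos hx ha).
move=> hds; eexists; exact: (X_PMAS esym eirr wsym wpos hds).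
Qed.
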